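(* There exists $K_0<\infty$ such that for every $K\in[K_0,\infty)$, every minimizer of $\mathcal{L}_K$ on $M_K$ is a non-constant function.
   Context: Fix $p>2$, $1<q<p$, $\sigma^2>0$. For $K\in(0,\infty)$, $I_K=(-K,K]$ and functions on $I_K$ are identified with $2K$-periodic functions on $\mathbb{R}$; $\|\cdot\|_{r,I_K}$ is the $L^r$ norm over $I_K$. $(\mathcal{A}W)(\varphi)=\int_{\varphi-1/2}^{\varphi+1/2}W(s)\,ds$. $X_K=\{W\in L^2(I_K):\mathcal{A}W\in L^q(I_K)\cap L^p(I_K)\}$, $\mathcal{Q}_K(W)=\int_{I_K}|\mathcal{A}W|^q$, $\mathcal{P}_K(W)=\int_{I_K}|\mathcal{A}W|^p$, $\mathcal{L}_K(W)=\tfrac12\sigma^2\|W\|_{2,I_K}^2+\mathcal{Q}_K(W)-\mathcal{P}_K(W)$, $\mathcal{F}_K(W)=\sigma^2\|W\|_{2,I_K}^2+q\mathcal{Q}_K(W)-p\mathcal{P}_K(W)$, $M_K=\{W\in X_K:W\ne0,\ \mathcal{F}_K(W)=0\}$. *)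

(* Defs.v *)
From Stdlib Require Import Reals Lra Classical ClassicalEpsilon.
Open Scope R_scope.

(* RI f a b = Riemann integral of f over [a,b] when f is Riemann integrable
   there, and 0 otherwise (only used on integrable functions). *)
Definition RI (f : R -> R) (a b : R) : R :=
  match excluded_middle_informative
          (exists v : R, exists pr : Riemann_integrable f a b, RiemannInt pr = v) with
  | left H => proj1_sig (constructive_indefinite_description _ H)
  | right _ => 0
  end.

(* Rlim s = limit of the real sequence s if it converges, 0 otherwise. *)
Definition Rlim (s : nat -> R) : R :=
  match excluded_middle_informative (exists l : R, Un_cv s l) with
  | left H => proj1_sig (constructive_indefinite_description _ H)
  | right _ => 0
  end.

(* |x|^r, with the convention |0|^r = 0 (r > 0 here). *)
Definition powabs (x r : R) : R :=
  if Req_EM_T x 0 then 0 else Rpower (Rabs x) r.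

(* continuous 2K-periodic functions on R  (= continuous functions on the circle I_K) *)
Definition Cper (K : R) (f : R -> R) : Prop :=
  continuity f /\ forall x, f (x + 2 * K) = f x.

Definition dist2 (K : R) (f g : R -> R) : R :=
  RI (fun x => (f x - g x) ^ 2) (- K) K.

(* An element W of L^2(I_K) is represented by an L^2-Cauchy sequence of
   continuous 2K-periodic functions (standard completion construction). *)
Definition L2seq (K : R) (u : nat -> R -> R) : Prop :=
  (forall n, Cper K (u n)) /\
  (forall eps, eps > 0 -> exists N : nat,
     forall n m, (n >= N)%nat -> (m >= N)%nat -> dist2 K (u n) (u m) < eps).

Definition L2eq (K : R) (u v : nat -> R -> R) : Prop :=
  Un_cv (fun n => dist2 K (u n) (v n)) 0.

Definition cst_seq (c : R) : nat -> R -> R := fun _ _ => c.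

Definition norm2sq (K : R) (u : nat -> R -> R) : R :=
  Rlim (fun n => RI (fun x => (u n x) ^ 2) (- K) K).

Definition AW (u : nat -> R -> R) (phi : R) : R :=
  Rlim (fun n => RI (u n) (phi - 1 / 2) (phi + 1 / 2)).

Definition Intpow (K r : R) (u : nat -> R -> R) : R :=
  RI (fun phi => powabs (AW u phi) r) (- K) K.

Definition QK (K q : R) u := Intpow K q u.
Definition PK (K p : R) u := Intpow K p u.

Definition LK (K p q sigma : R) u : R :=
  1 / 2 * sigma ^ 2 * norm2sq K u + QK K q u - PK K p u.

Definition FK (K p q sigma : R) u : R :=
  sigma ^ 2 * norm2sq K u + q * QK K q u - p * PK K p u.

Definition XK (K p q : R) (u : nat -> R -> R) : Prop :=
  L2seq K u /\
  inhabited (Riemann_integrable (fun phi => powabs (AW u phi) q) (- K) K) /\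
  inhabited (Riemann_integrable (fun phi => powabs (AW u phi) p) (- K) K).

Definition MK (K p q sigma : R) (u : nat -> R -> R) : Prop :=
  XK K p q u /\ ~ L2eq K u (cst_seq 0) /\ FK K p q sigma u = 0.

Definition minimizer (K p q sigma : R) (u : nat -> R -> R) : Prop :=
  MK K p q sigma u /\
  forall v, MK K p q sigma v -> LK K p q sigma u <= LK K p q sigma v.

Definition is_constant (K : R) (u : nat -> R -> R) : Prop :=
  exists c : R, L2eq K u (cst_seq c).

(* Main.v *)
Require Import Defs.
From Stdlib Require Import Reals Lra Ranalysis5 FunctionalExtensionality Classical ClassicalEpsilon.
From Coquelicot Require Import Coquelicot.
Open Scope R_scope.

Lemma RI_pr f a b (pr : Riemann_integrable f a b) : RI f a b = RiemannInt pr.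
Proof.
  unfold RI. destruct excluded_middle_informative as [H|H].
  - destruct (constructive_indefinite_description _ H) as [v [pr' Hv]]. simpl.
    rewrite <- Hv. apply RiemannInt_P5.
  - exfalso. apply H. exists (RiemannInt pr), pr. reflexivity.
Qed.

Lemma RI_RInt f a b : ex_RInt f a b -> RI f a b = RInt f a b.
Proof.
  intros H. rewrite (RI_pr f a b (ex_RInt_Reals_0 f a b H)).
  symmetry. apply RInt_Reals.
Qed.

Lemma Rlim_cv s l : Un_cv s l -> Rlim s = l.
Proof.
  intros H. unfold Rlim. destruct excluded_middle_informative as [H'|H'].
  - destruct (constructive_indefinite_description _ H') as [l' Hl']. simpl.
    exact (UL_sequence s l' l Hl' H).
  - exfalso. apply H'. exists l. exact H.
Qed.

Lemma Un_cv_const c : Un_cv (fun _ => c) c.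
Proof. intros e He. exists 0%nat. intros. unfold Rdist. rewrite Rminus_eq_0, Rabs_R0. lra. Qed.

Lemma Rlim_const c : Rlim (fun _ => c) = c.
Proof. apply Rlim_cv, Un_cv_const. Qed.

Lemma cont_c f x : continuity_pt f x -> continuous f x.
Proof. intros H. apply (continuity_pt_filterlim f x). exact H. Qed.

Lemma exRI f a b : continuity f -> ex_RInt f a b.
Proof. intros H. apply (ex_RInt_continuous (V:=R_CompleteNormedModule)). intros. apply cont_c, H. Qed.

Lemma RI_cont f a b : continuity f -> RI f a b = RInt f a b.
Proof. intros H. apply RI_RInt, exRI, H. Qed.

Lemma amgm y e : 0 < e -> Rabs y <= y^2/(2*e) + e/2.
Proof.
  intros He. assert (Hy: y^2/(2*e) + e/2 - Rabs y = (Rabs y - e)^2/(2*e)).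
  { rewrite <- (pow2_abs y). field. lra. }
  assert (0 <= (Rabs y - e)^2/(2*e)).
  { apply Rmult_le_pos. apply pow2_ge_0. left. apply Rinv_0_lt_compat. lra. }
  lra.
Qed.

Lemma RInt_lin f a b e c : ex_RInt f a b ->
  @eq R (RInt (fun x => f x / e + c) a b) (RInt f a b / e + c * (b - a)).
Proof.
  intros H. apply is_RInt_unique.
  replace (RInt f a b / e + c * (b - a)) with (plus (scal (/e) (RInt f a b)) (scal (b-a) c)).
  2:{ unfold plus, scal; simpl. unfold mult; simpl. change (Rplus (/ e * RInt f a b) ((b - a) * c) = RInt f a b / e + c * (b - a)). unfold Rdiv. ring. }
  apply (is_RInt_ext (fun x => plus (scal (/e) (f x)) c)).
  { intros x _. unfold plus, scal; simpl. unfold mult; simpl. change (/ e * f x + c = f x / e + c). unfold Rdiv. ring. }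
  apply (is_RInt_plus (V:=R_CompleteNormedModule) (fun x => scal (/e) (f x)) (fun _ => c)).
  - apply (is_RInt_scal (V:=R_CompleteNormedModule)). apply (RInt_correct (V:=R_CompleteNormedModule)). exact H.
  - apply (is_RInt_const (V:=R_CompleteNormedModule)).
Qed.

Lemma cg_plus f g : continuity f -> continuity g -> continuity (fun y => f y + g y).
Proof. intros. exact (continuity_plus f g H H0). Qed.
Lemma cg_minus f g : continuity f -> continuity g -> continuity (fun y => f y - g y).
Proof. intros. exact (continuity_minus f g H H0). Qed.
Lemma cg_mult f g : continuity f -> continuity g -> continuity (fun y => f y * g y).
Proof. intros. exact (continuity_mult f g H H0). Qed.
Lemma cg_const c : continuity (fun _ => c).
Proof. exact (continuity_const (fun _ => c) (fun x y => eq_refl)). Qed.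
Lemma cg_id : continuity (fun y => y).
Proof. exact (derivable_continuous _ derivable_id). Qed.

Lemma cg_sq f : continuity f -> continuity (fun y => f y ^ 2).
Proof. intros H. assert (E: (fun y => f y ^ 2) = (fun y => f y * f y)) by (apply functional_extensionality; intros; ring).
  rewrite E. apply cg_mult; auto. Qed.
Lemma cg_comp f g : continuity f -> continuity g -> continuity (fun y => g (f y)).
Proof. intros Hf Hg x. exact (continuity_pt_comp f g x (Hf x) (Hg (f x))). Qed.
Lemma cg_abs : continuity Rabs.
Proof. exact Rcontinuity_abs. Qed.
Lemma cg_cos : continuity cos.
Proof. exact continuity_cos. Qed.

Ltac Rring := match goal with |- ?a = ?b => change (@eq R a b) end; ring.
Ltac contg := repeat first [ assumption | apply cg_const | apply cg_id | apply cg_sq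
  | apply cg_plus | apply cg_minus | apply cg_mult ].

Lemma RInt_plus' f g a b : continuity f -> continuity g ->
  @eq R (RInt (fun x => f x + g x) a b) (RInt f a b + RInt g a b).
Proof.
  intros Hf Hg. apply is_RInt_unique.
  apply (is_RInt_plus (V:=R_CompleteNormedModule) f g);
    apply (RInt_correct (V:=R_CompleteNormedModule)); apply exRI; auto.
Qed.

Lemma RInt_scal' f a b k : continuity f -> @eq R (RInt (fun x => k * f x) a b) (k * RInt f a b).
Proof.
  intros Hf. apply is_RInt_unique.
  apply (is_RInt_scal (V:=R_CompleteNormedModule) f).
  apply (RInt_correct (V:=R_CompleteNormedModule)); apply exRI; auto.
Qed.

Lemma RInt_const' c a b : @eq R (RInt (fun _ => c) a b) (c * (b - a)).
Proof.
  apply is_RInt_unique.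
  replace (c * (b - a)) with (scal (b - a) c).
  - apply (is_RInt_const (V:=R_CompleteNormedModule)).
  - unfold scal; simpl. unfold mult; simpl. change ((b - a) * c = c * (b - a)). ring.
Qed.

Lemma RInt_opp' f a b : continuity f -> @eq R (RInt (fun x => - f x) a b) (- RInt f a b).
Proof.
  intros Hf. replace (fun x => - f x) with (fun x => (-1) * f x).
  - rewrite RInt_scal'; auto. ring.
  - apply functional_extensionality; intros; ring.
Qed.

Lemma RInt_minus' f g a b : continuity f -> continuity g ->
  @eq R (RInt (fun x => f x - g x) a b) (RInt f a b - RInt g a b).
Proof.
  intros Hf Hg. replace (fun x => f x - g x) with (fun x => f x + (- g x)).
  - rewrite RInt_plus'; [| auto | apply (continuity_opp g Hg)].
    rewrite RInt_opp'; auto.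
  - apply functional_extensionality; intros; ring.
Qed.

Lemma chasles F a b c : continuity F -> @eq R (RInt F a b + RInt F b c) (RInt F a c).
Proof. intros H. apply (RInt_Chasles (V:=R_CompleteNormedModule)); apply exRI; auto. Qed.

Lemma RInt_ge0 F a b : a <= b -> continuity F -> (forall x, 0 <= F x) -> 0 <= RInt F a b.
Proof. intros. apply RInt_ge_0; auto. apply exRI; auto. Qed.

Lemma RInt_le' f g a b : a <= b -> continuity f -> continuity g -> (forall x, f x <= g x) ->
  RInt f a b <= RInt g a b.
Proof. intros. apply RInt_le; auto; apply exRI; auto. Qed.

Lemma absint_bound f a b e : a <= b -> 0 < e -> continuity f ->
  Rabs (RInt f a b) <= RInt (fun x => f x ^ 2) a b / (2*e) + e/2 * (b - a).
Proof.
  intros Hab He Hf.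
  assert (Hg : continuity (fun x => f x ^ 2 / (2*e) + e/2)).
  { unfold Rdiv. contg. }
  rewrite <- RInt_lin. 2: apply exRI; contg.
  apply Rabs_le. split.
  - rewrite <- RInt_opp'; auto. apply RInt_le'; auto.
    apply (continuity_opp _ Hg).
    intros x. pose proof (amgm (f x) e He). pose proof (Rle_abs (- f x)). rewrite Rabs_Ropp in H0. lra.
  - apply RInt_le'; auto. intros x. pose proof (amgm (f x) e He). pose proof (Rle_abs (f x)). lra.
Qed.

Lemma RInt_sub_le F a c d b : a <= c -> c <= d -> d <= b -> continuity F ->
  (forall x, 0 <= F x) -> RInt F c d <= RInt F a b.
Proof.
  intros H1 H2 H3 HF Hp.
  rewrite <- (chasles F a c b HF), <- (chasles F c d b HF).
  pose proof (RInt_ge0 F a c H1 HF Hp). pose proof (RInt_ge0 F d b H3 HF Hp). lra.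
Qed.

Lemma RInt_shift F a b v : continuity F ->
  @eq R (RInt (fun y => F (y + v)) a b) (RInt F (a+v) (b+v)).
Proof.
  intros HF.
  rewrite (RInt_ext (fun y => F (y+v)) (fun y => scal 1 (F (1*y+v)))).
  2:{ intros. replace (1*x+v) with (x+v) by ring. symmetry. exact (scal_one (V:=R_NormedModule) (F (x+v))). }
  rewrite (RInt_comp_lin (V:=R_CompleteNormedModule)). 2: apply exRI; auto.
  f_equal; ring.
Qed.

Lemma window_le F K w : 1/2 <= K -> -K <= w <= K -> continuity F -> (forall x, 0 <= F x) ->
  (forall x, F (x + 2*K) = F x) ->
  RInt F (w - 1/2) (w + 1/2) <= 3 * RInt F (-K) K.
Proof.
  intros HK Hw HF Hp Hper.
  apply Rle_trans with (RInt F (-(2*K)) (2*K)).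
  { apply RInt_sub_le; auto; lra. }
  rewrite <- (chasles F (-(2*K)) (-K) (2*K) HF), <- (chasles F (-K) K (2*K) HF).
  assert (E1 : @eq R (RInt F (-(2*K)) (-K)) (RInt F 0 K)).
  { transitivity (RInt (fun y => F (y + -(2*K))) 0 K).
    - rewrite RInt_shift; auto. replace (0 + -(2*K)) with (-(2*K)) by ring.
      replace (K + -(2*K)) with (-K) by ring. reflexivity.
    - apply RInt_ext. intros. rewrite <- (Hper (x + - (2*K))). f_equal. ring. }
  assert (E2 : @eq R (RInt F K (2*K)) (RInt F (-K) 0)).
  { transitivity (RInt (fun y => F (y + 2*K)) (-K) 0).
    - rewrite RInt_shift; auto. replace (-K + 2*K) with K by ring.
      replace (0 + 2*K) with (2*K) by ring. reflexivity.
    - apply RInt_ext. intros. apply Hper. }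
  rewrite E1, E2.
  pose proof (RInt_sub_le F (-K) 0 K K ltac:(lra) ltac:(lra) ltac:(lra) HF Hp).
  pose proof (RInt_sub_le F (-K) (-K) 0 K ltac:(lra) ltac:(lra) ltac:(lra) HF Hp).
  lra.
Qed.

Lemma squeeze e x D : 0 < D -> Un_cv e 0 ->
  (forall n eps, 0 < eps -> Rabs (x n) <= e n / (2*eps) + eps/2 * D) -> Un_cv x 0.
Proof.
  intros HD He Hx eta Heta.
  set (eps := eta / D).
  assert (Heps : 0 < eps) by (unfold eps; apply Rdiv_lt_0_compat; lra).
  destruct (He (eta * eps)) as [N HN]. { apply Rmult_lt_0_compat; lra. }
  exists N. intros n Hn. specialize (HN n Hn). unfold Rdist in *. rewrite Rminus_0_r in *.
  specialize (Hx n eps Heps).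
  assert (A1 : e n / (2*eps) < eta / 2).
  { apply Rle_lt_trans with (Rabs (e n) / (2*eps)).
    - unfold Rdiv. apply Rmult_le_compat_r. left; apply Rinv_0_lt_compat; lra. apply Rle_abs.
    - apply Rmult_lt_reg_r with (2*eps). lra. unfold Rdiv. rewrite Rmult_assoc, Rinv_l by lra. lra. }
  assert (A2 : eps / 2 * D = eta / 2). { unfold eps. field. lra. }
  lra.
Qed.

Lemma div_le_compat a b d : 0 < d -> a <= b -> a / d <= b / d.
Proof. intros. unfold Rdiv. apply Rmult_le_compat_r; auto. left; apply Rinv_0_lt_compat; auto. Qed.

Lemma const_class K u c : 1/2 <= K -> L2seq K u -> L2eq K u (cst_seq c) ->
  norm2sq K u = 2*K*c^2 /\ (forall w, -K <= w <= K -> AW u w = c).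
Proof.
  intros HK [Hper _] Hcv.
  assert (Hc : forall n, continuity (u n)) by (intro n; apply (Hper n)).
  assert (Hp : forall n x, u n (x + 2*K) = u n x) by (intros n x; apply (Hper n)).
  set (e := fun n => RInt (fun x => (u n x - c)^2) (-K) K).
  assert (He : Un_cv e 0).
  { unfold L2eq, dist2, cst_seq in Hcv. eapply Un_cv_ext; [|exact Hcv].
    intros n. unfold e. apply RI_cont. pose proof (Hc n). contg. }
  split.
  - unfold norm2sq. apply Rlim_cv.
    set (y := fun n => RInt (fun x => u n x - c) (-K) K).
    assert (Hy : Un_cv y 0).
    { apply (squeeze e y (2*K)). lra. exact He.
      intros n eps Heps. unfold y, e. replace (2*K) with (K - -K) by ring.
      apply absint_bound; [lra|auto|]. pose proof (Hc n). contg. }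
    assert (Hl := CV_plus _ _ _ _ (CV_plus _ _ _ _ He (CV_mult _ _ _ _ (Un_cv_const (2*c)) Hy))
                    (Un_cv_const (c^2 * (K - - K)))).
    replace (2*K*c^2) with (0 + 2*c*0 + c^2*(K - -K)) by ring.
    eapply Un_cv_ext; [|exact Hl]. intros n. simpl.
    pose proof (Hc n).
    rewrite RI_cont by contg.
    unfold e, y. rewrite <- RInt_scal' by contg. rewrite <- RInt_plus' by contg.
    rewrite <- RInt_const'. rewrite <- RInt_plus' by contg.
    apply RInt_ext. intros. Rring.
  - intros w Hw. unfold AW. apply Rlim_cv.
    set (z := fun n => RInt (fun x => u n x - c) (w - 1/2) (w + 1/2)).
    assert (Hz : Un_cv z 0).
    { apply (squeeze (fun n => 3 * e n) z 1). lra.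
      { replace 0 with (3 * 0) by ring. apply (CV_mult _ _ _ _ (Un_cv_const 3) He). }
      intros n eps Heps. unfold z.
      assert (Hcn := Hc n).
      eapply Rle_trans. apply (absint_bound _ _ _ eps); [lra|auto|contg].
      replace (w + 1/2 - (w - 1/2)) with 1 by field.
      apply Rplus_le_compat_r. apply div_le_compat. lra.
      unfold e. apply window_le; auto. contg.
      intros; apply pow2_ge_0.
      intros. rewrite Hp. reflexivity. }
    replace c with (0 + c * ((w + 1/2) - (w - 1/2))) by field.
    eapply Un_cv_ext; [|exact (CV_plus _ _ _ _ Hz (Un_cv_const _))].
    intros n. simpl. pose proof (Hc n). rewrite RI_cont by auto.
    unfold z. rewrite RInt_minus' by contg. rewrite RInt_const'. ring.
Qed.

Lemma powabs_pos x r : x <> 0 -> powabs x r = Rpower (Rabs x) r.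
Proof. intros H. unfold powabs. destruct Req_EM_T; [contradiction|reflexivity]. Qed.

Lemma powabs_0 r : powabs 0 r = 0.
Proof. unfold powabs. destruct Req_EM_T; [reflexivity|contradiction]. Qed.

Lemma powabs_ge0 x r : 0 <= powabs x r.
Proof. unfold powabs. destruct Req_EM_T. lra. left. apply exp_pos. Qed.

Lemma Rpower2 a : 0 < a -> Rpower a 2 = a^2.
Proof. intros. replace 2 with (INR 2) by (simpl; ring). apply Rpower_pow; auto. Qed.

Lemma numeric_I p q s2 K a : 2<p -> 1<q -> q<p -> 0<s2 -> 0<K -> 0<a ->
  s2*(2*K*a^2) + q*(2*K*Rpower a q) - p*(2*K*Rpower a p) = 0 ->
  2*K*((1/2 - 1/p)*s2*Rpower (s2/p) (2/(p-2))) <=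
  1/2*s2*(2*K*a^2) + 2*K*Rpower a q - 2*K*Rpower a p.
Proof.
  intros hp hq hqp hs hK ha HF.
  assert (E : p * Rpower a p = s2*a^2 + q * Rpower a q).
  { apply Rmult_eq_reg_l with (2*K). 2: lra. lra. }
  assert (Hq : 0 < Rpower a q) by apply exp_pos.
  assert (Hsplit : Rpower a p = Rpower a (p-2) * a^2).
  { rewrite <- Rpower2 by auto. rewrite <- Rpower_plus. f_equal. ring. }
  assert (Hb : s2 / p <= Rpower a (p-2)).
  { assert (Ha2 : 0 < a^2) by (apply pow_lt; auto).
    apply Rmult_le_reg_r with (p * a^2). apply Rmult_lt_0_compat; lra.
    replace (s2 / p * (p * a ^ 2)) with (s2 * a^2) by (field; lra).
    replace (Rpower a (p - 2) * (p * a ^ 2)) with (p * Rpower a p) by (rewrite Hsplit; ring).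
    rewrite E. pose proof (Rmult_le_pos q (Rpower a q)). lra. }
  assert (Hm : Rpower (s2/p) (2/(p-2)) <= a^2).
  { apply Rle_trans with (Rpower (Rpower a (p-2)) (2/(p-2))).
    - apply Rle_Rpower_l. left; apply Rdiv_lt_0_compat; lra.
      split; auto. apply Rdiv_lt_0_compat; lra.
    - rewrite Rpower_mult. replace ((p-2) * (2/(p-2))) with 2 by (field; lra).
      rewrite Rpower2; auto. lra. }
  assert (Hap : Rpower a p = (s2*a^2 + q * Rpower a q) / p) by (rewrite <- E; field; lra).
  rewrite Hap.
  assert (H1 : 0 <= (1/2 - 1/p)*s2).
  { apply Rmult_le_pos; [|lra]. assert (1/p < 1/2). { apply Rmult_lt_reg_r with (2*p). lra. field_simplify; lra. } lra. }
  assert (H2 : 0 <= (1 - q/p) * Rpower a q).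
  { apply Rmult_le_pos; [|lra]. assert (q/p < 1). { apply Rmult_lt_reg_r with p. lra. field_simplify; lra. } lra. }
  assert (Hexp : 1/2*s2*(2*K*a^2) + 2*K*Rpower a q - 2*K*((s2*a^2 + q * Rpower a q) / p)
               = 2*K*((1/2 - 1/p)*s2*a^2 + (1 - q/p) * Rpower a q)) by (field; lra).
  rewrite Hexp. apply Rmult_le_compat_l. lra.
  assert ((1/2 - 1/p)*s2*Rpower (s2/p) (2/(p-2)) <= (1/2 - 1/p)*s2*a^2).
  { apply Rmult_le_compat_l; auto. }
  lra.
Qed.

Definition pos z := (z + Rabs z) / 2.
Definition tent x := pos (1 - Rabs x).
Definition clampc y := 1/2 + pos (y - 1/2) - pos (y - 1).
Definition Ac y := atan (sqrt (1 - clampc y ^ 2) / clampc y).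
Definition gK K x := pos (1 - K / PI * Ac (cos (PI * x / K))).

Lemma pos_id z : 0 <= z -> pos z = z.
Proof. intros. unfold pos. rewrite Rabs_right by lra. field. Qed.
Lemma pos_0 z : z <= 0 -> pos z = 0.
Proof. intros. unfold pos. rewrite Rabs_left1 by lra. field. Qed.
Lemma pos_ge0 z : 0 <= pos z.
Proof. unfold pos. pose proof (Rle_abs (-z)). rewrite Rabs_Ropp in H. lra. Qed.
Lemma cg_pos f : continuity f -> continuity (fun y => pos (f y)).
Proof. intros H. unfold pos. unfold Rdiv. apply cg_mult; [|apply cg_const].
  apply cg_plus; auto. apply (cg_comp f Rabs H cg_abs). Qed.

Lemma clampc_bounds y : 1/2 <= clampc y <= 1.
Proof.
  unfold clampc. destruct (Rle_dec y (1/2)).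
  - rewrite (pos_0 (y - 1/2)), (pos_0 (y-1)) by lra. lra.
  - destruct (Rle_dec y 1).
    + rewrite (pos_id (y - 1/2)), (pos_0 (y-1)) by lra. lra.
    + rewrite (pos_id (y - 1/2)), (pos_id (y-1)) by lra. lra.
Qed.
Lemma clampc_id y : 1/2 <= y <= 1 -> clampc y = y.
Proof. intros. unfold clampc. rewrite (pos_id (y - 1/2)), (pos_0 (y-1)) by lra. lra. Qed.
Lemma clampc_low y : y <= 1/2 -> clampc y = 1/2.
Proof. intros. unfold clampc. rewrite (pos_0 (y - 1/2)), (pos_0 (y-1)) by lra. lra. Qed.
Lemma cg_clampc : continuity clampc.
Proof. unfold clampc. apply cg_minus; [apply cg_plus|]; [apply cg_const| |];
  apply cg_pos; contg. Qed.

Lemma Ac_acos y : 1/2 <= y <= 1 -> Ac y = acos y.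
Proof. intros. unfold Ac. rewrite clampc_id by auto. rewrite acos_atan by lra.
  unfold Rsqr. f_equal. f_equal. f_equal. ring. Qed.

Lemma cg_Ac : continuity Ac.
Proof.
  intros y. unfold Ac.
  pose proof (clampc_bounds y) as Hb.
  change (continuity_pt (comp atan (fun y => sqrt (1 - clampc y ^ 2) / clampc y)) y).
  apply continuity_pt_comp.
  2: apply derivable_continuous_pt, derivable_pt_atan.
  apply continuity_pt_div.
  - change (continuity_pt (comp sqrt (fun y => 1 - clampc y ^ 2)) y).
    apply continuity_pt_comp.
    + assert (H : continuity (fun y => 1 - clampc y ^ 2)).
      { apply cg_minus. apply cg_const. apply cg_sq. apply cg_clampc. }
      apply H.
    + apply continuity_pt_sqrt. assert (clampc y ^ 2 <= 1). { simpl. nra. } lra.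
  - apply cg_clampc.
  - lra.
Qed.

Lemma cg_gK K : continuity (gK K).
Proof.
  unfold gK. apply cg_pos. apply cg_minus. apply cg_const. apply cg_mult. apply cg_const.
  apply (cg_comp _ Ac); [|apply cg_Ac]. apply (cg_comp _ cos); [|apply cg_cos].
  unfold Rdiv. contg.
Qed.

Lemma gK_per K x : 0 < K -> gK K (x + 2*K) = gK K x.
Proof.
  intros HK. unfold gK. replace (PI * (x + 2*K) / K) with (PI * x / K + 2 * INR 1 * PI).
  - rewrite cos_period. reflexivity.
  - simpl. field. lra.
Qed.

Lemma gK_core K s : 3 <= K -> 0 <= s <= K ->
  pos (1 - K / PI * Ac (cos (PI * s / K))) = tent s.
Proof.
  intros HK Hs. unfold tent. rewrite Rabs_right by lra.
  pose proof PI_RGT_0 as Hpi.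
  set (t := PI * s / K).
  assert (Ht : 0 <= t <= PI).
  { unfold t. split. apply Rmult_le_pos. apply Rmult_le_pos; lra. left; apply Rinv_0_lt_compat; lra.
    apply Rmult_le_reg_r with K. lra. unfold Rdiv. rewrite Rmult_assoc, Rinv_l by lra. nra. }
  assert (Hs' : s = K / PI * t) by (unfold t; field; lra).
  destruct (Rle_dec t (PI/3)) as [Hle|Hgt].
  - assert (Hc : 1/2 <= cos t <= 1).
    { split. 2: apply COS_bound. rewrite <- cos_PI3. destruct (Req_dec t (PI/3)).
      + rewrite H; lra.
      + left. apply cos_decreasing_1; lra. }
    rewrite Ac_acos by auto. rewrite acos_cos by auto. rewrite <- Hs'. reflexivity.
  - assert (Hc : cos t <= 1/2).
    { rewrite <- cos_PI3. left. apply cos_decreasing_1; lra. }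
    assert (E : Ac (cos t) = Ac (1/2)).
    { unfold Ac. rewrite (clampc_low (cos t)), (clampc_low (1/2)) by lra. reflexivity. }
    rewrite E. rewrite Ac_acos by lra. rewrite <- cos_PI3, acos_cos by lra.
    rewrite !pos_0. reflexivity.
    + rewrite Hs'. assert (K / PI * t >= K/PI * (PI/3)).
      { apply Rle_ge, Rmult_le_compat_l. left; apply Rdiv_lt_0_compat; lra. lra. }
      assert (K / PI * (PI/3) = K/3) by (field; lra). lra.
    + assert (K / PI * (PI/3) = K/3) by (field; lra). lra.
Qed.

Lemma gK_tent K x : 3 <= K -> Rabs x <= K + 1/2 -> gK K x = tent x.
Proof.
  intros HK Hx. pose proof PI_RGT_0 as Hpi.
  assert (Hc : cos (PI * x / K) = cos (PI * Rabs x / K)).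
  { destruct (Rle_dec 0 x). rewrite Rabs_right by lra. reflexivity.
    rewrite Rabs_left by lra. replace (PI * - x / K) with (- (PI * x / K)) by (field; lra).
    rewrite cos_neg. reflexivity. }
  unfold gK. rewrite Hc.
  assert (Ht : tent x = tent (Rabs x)) by (unfold tent; rewrite Rabs_Rabsolu; reflexivity).
  destruct (Rle_dec (Rabs x) K).
  - rewrite gK_core; auto. split; auto. apply Rabs_pos.
  - replace (PI * Rabs x / K) with (2 * PI - PI * (2*K - Rabs x) / K) by (field; lra).
    rewrite cos_minus, cos_2PI, sin_2PI. replace (1 * cos (PI * (2 * K - Rabs x) / K) + 0 * sin (PI * (2 * K - Rabs x) / K)) with (cos (PI * (2 * K - Rabs x) / K)) by ring.
    rewrite gK_core by lra. unfold tent. rewrite !pos_0. reflexivity.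
    + lra.
    + rewrite Rabs_right by lra. lra.
Qed.

Lemma tent_ge0 x : 0 <= tent x.
Proof. apply pos_ge0. Qed.
Lemma tent_0 x : 1 <= Rabs x -> tent x = 0.
Proof. intros. unfold tent. apply pos_0. lra. Qed.
Lemma tent_pos x : Rabs x < 1 -> 0 < tent x.
Proof. intros. unfold tent. rewrite pos_id by lra. lra. Qed.
Lemma cg_tent : continuity tent.
Proof. unfold tent. apply cg_pos. apply cg_minus. apply cg_const. apply cg_abs. Qed.

Lemma cont_local f g x : continuity_pt g x ->
  (exists d, 0 < d /\ forall y, Rabs (y - x) < d -> f y = g y) -> continuity_pt f x.
Proof.
  intros Hg [d [Hd Hfg]].
  unfold continuity_pt, continue_in, limit1_in, limit_in in *. simpl in *.
  intros eps Heps. destruct (Hg eps Heps) as [a [Ha Hy]].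
  exists (Rmin a d). split. apply Rmin_pos; lra.
  intros y [Hdx Hyd]. unfold Rdist in *.
  rewrite (Hfg y), (Hfg x). apply Hy. split; auto. pose proof (Rmin_l a d). lra.
  rewrite Rminus_eq_0, Rabs_R0; auto. pose proof (Rmin_r a d). lra.
Qed.

Lemma cg_powabs r : 0 < r -> continuity (fun x => powabs x r).
Proof.
  intros Hr x. destruct (Req_dec x 0) as [Hx|Hx].
  - subst x. unfold continuity_pt, continue_in, limit1_in, limit_in. simpl.
    intros eps Heps. exists (Rpower eps (/r)). split. apply exp_pos.
    intros y [_ Hy]. unfold Rdist in *. rewrite Rminus_0_r in Hy. rewrite powabs_0, Rminus_0_r.
    rewrite Rabs_right by (apply Rle_ge, powabs_ge0).
    destruct (Req_dec y 0). subst y. rewrite powabs_0. lra.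
    rewrite powabs_pos by auto.
    replace eps with (Rpower (Rpower eps (/r)) r).
    apply Rlt_Rpower_l; auto. split; auto. apply Rabs_pos_lt; auto.
    rewrite Rpower_mult, Rinv_l, Rpower_1; lra.
  - apply cont_local with (fun y => Rpower (Rabs y) r).
    + change (continuity_pt (comp (fun z => Rpower z r) Rabs) x).
      apply continuity_pt_comp. apply cg_abs.
      apply derivable_continuous_pt. exists (r * Rpower (Rabs x) (r-1)).
      apply derivable_pt_lim_power. apply Rabs_pos_lt; auto.
    + exists (Rabs x). split. apply Rabs_pos_lt; auto.
      intros y Hy. apply powabs_pos. intros ->. rewrite Rminus_0_l, Rabs_Ropp in Hy. lra.
Qed.

Lemma powabs_scal t y r : 0 < t -> powabs (t * y) r = Rpower t r * powabs y r.
Proof.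
  intros Ht. destruct (Req_dec y 0).
  - subst. rewrite Rmult_0_r, powabs_0. ring.
  - rewrite !powabs_pos; auto. rewrite Rabs_mult, Rabs_right by lra.
    rewrite Rpower_mult_distr; auto. apply Rabs_pos_lt; auto.
    intro H0. apply Rmult_integral in H0. destruct H0; lra.
Qed.

Definition Tw (F : R -> R) (w : R) := RInt F (w - 1/2) (w + 1/2).

Lemma cg_prim F : continuity F -> continuity (fun z => RInt F 0 z).
Proof.
  intros H z. apply continuity_pt_filterlim.
  apply (continuous_RInt_1 (V:=R_CompleteNormedModule) F 0 z (fun z => RInt F 0 z)).
  apply filter_forall. intros y. apply (RInt_correct (V:=R_CompleteNormedModule)). apply exRI; auto.
Qed.

Lemma cg_Tw F : continuity F -> continuity (Tw F).
Proof.
  intros H.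
  assert (E : Tw F = fun w => RInt F 0 (w + 1/2) - RInt F 0 (w - 1/2)).
  { apply functional_extensionality. intros w. unfold Tw.
    rewrite <- (chasles F (w - 1/2) 0 (w + 1/2) H).
    pose proof (chasles F 0 (w - 1/2) 0 H). rewrite RInt_point in H0.
    change (@eq R (RInt F (w - 1 / 2) 0 + RInt F 0 (w + 1 / 2)) (RInt F 0 (w + 1 / 2) - RInt F 0 (w - 1 / 2))).
    change (@eq R (RInt F 0 (w - 1 / 2) + RInt F (w - 1 / 2) 0) 0) in H0. lra. }
  rewrite E. apply cg_minus.
  - apply (cg_comp (fun w => w + 1/2) (fun z => RInt F 0 z)). contg. apply cg_prim; auto.
  - apply (cg_comp (fun w => w - 1/2) (fun z => RInt F 0 z)). contg. apply cg_prim; auto.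
Qed.

Lemma RInt_ext_le f g a b : a <= b -> (forall x, a < x < b -> f x = g x) ->
  @eq R (RInt f a b) (RInt g a b).
Proof. intros Hab H. apply RInt_ext. rewrite Rmin_left, Rmax_right by auto. auto. Qed.

Lemma RInt_zero F a b : a <= b -> (forall x, a < x < b -> F x = 0) -> @eq R (RInt F a b) 0.
Proof. intros Hab H. rewrite (RInt_ext_le F (fun _ => 0) a b Hab H). rewrite RInt_const'. ring. Qed.

Lemma RInt_support F K b : 0 < b <= K -> continuity F -> (forall x, b <= Rabs x -> F x = 0) ->
  @eq R (RInt F (-K) K) (RInt F (-b) b).
Proof.
  intros Hb HF H0.
  rewrite <- (chasles F (-K) (-b) K HF), <- (chasles F (-b) b K HF).
  rewrite (RInt_zero F (-K) (-b)), (RInt_zero F b K); try lra.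
  - intros x Hx. apply H0. rewrite Rabs_right; lra.
  - intros x Hx. apply H0. rewrite Rabs_left; lra.
Qed.

Lemma Tw_tent_0 w : 3/2 <= Rabs w -> Tw tent w = 0.
Proof.
  intros Hw. unfold Tw. apply RInt_zero. lra.
  intros x Hx. apply tent_0.
  destruct (Rle_dec 0 w).
  - rewrite Rabs_right in Hw by lra. rewrite Rabs_right; lra.
  - rewrite Rabs_left in Hw by lra. rewrite Rabs_left; lra.
Qed.

Lemma Tw_tent_pos w : Rabs w < 1/2 -> 0 < Tw tent w.
Proof.
  intros Hw. unfold Tw. apply RInt_gt_0. lra.
  - intros x Hx. apply tent_pos. apply Rabs_def1.
    + assert (w < 1/2) by (pose proof (Rle_abs w); lra). lra.
    + assert (-w < 1/2) by (pose proof (Rle_abs (-w)); rewrite Rabs_Ropp in *; lra). lra.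
  - intros. apply cont_c, cg_tent.
Qed.

Lemma Tw_tent_ge0 w : 0 <= Tw tent w.
Proof. unfold Tw. apply RInt_ge0. lra. apply cg_tent. apply tent_ge0. Qed.

Lemma Tw_gK K w : 3 <= K -> -K <= w <= K -> Tw (gK K) w = Tw tent w.
Proof.
  intros HK Hw. unfold Tw. apply RInt_ext_le. lra.
  intros x Hx. apply gK_tent; auto. apply Rabs_le. lra.
Qed.

Definition A0 := RInt (fun x => tent x ^ 2) (-1) 1.
Definition Bc r := RInt (fun w => powabs (Tw tent w) r) (-(3/2)) (3/2).

Lemma A0_pos : 0 < A0.
Proof.
  unfold A0. apply RInt_gt_0. lra.
  - intros x Hx. apply pow_lt. apply tent_pos. apply Rabs_def1; lra.
  - intros. apply cont_c. apply cg_sq, cg_tent.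
Qed.

Lemma cg_Tpow r : 0 < r -> continuity (fun w => powabs (Tw tent w) r).
Proof. intros Hr. apply (cg_comp (Tw tent) (fun x => powabs x r)). apply cg_Tw, cg_tent. apply cg_powabs; auto. Qed.

Lemma Bc_ge0 r : 0 < r -> 0 <= Bc r.
Proof. intros Hr. unfold Bc. apply RInt_ge0. lra. apply cg_Tpow; auto. intros; apply powabs_ge0. Qed.

Lemma Bc_pos r : 0 < r -> 0 < Bc r.
Proof.
  intros Hr. unfold Bc.
  rewrite <- (chasles _ (-(3/2)) (-(1/4)) (3/2)) by (apply cg_Tpow; auto).
  rewrite <- (chasles _ (-(1/4)) (1/4) (3/2)) by (apply cg_Tpow; auto).
  pose proof (RInt_ge0 (fun w => powabs (Tw tent w) r) (-(3/2)) (-(1/4)) ltac:(lra) (cg_Tpow r Hr) (fun x => powabs_ge0 _ _)).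
  pose proof (RInt_ge0 (fun w => powabs (Tw tent w) r) (1/4) (3/2) ltac:(lra) (cg_Tpow r Hr) (fun x => powabs_ge0 _ _)).
  assert (0 < RInt (fun w => powabs (Tw tent w) r) (-(1/4)) (1/4)).
  { apply RInt_gt_0. lra.
    - intros x Hx. assert (Hp : 0 < Tw tent x) by (apply Tw_tent_pos; apply Rabs_def1; lra).
      rewrite powabs_pos by lra. apply exp_pos.
    - intros. apply cont_c, cg_Tpow; auto. }
  lra.
Qed.

Definition vseq (K t : R) : nat -> R -> R := fun _ x => t * gK K x.

Lemma cg_v K t : continuity (fun x => t * gK K x).
Proof. apply cg_mult. apply cg_const. apply cg_gK. Qed.

Lemma v_sq K t : 3 <= K -> @eq R (RInt (fun x => (t * gK K x)^2) (-K) K) (t^2 * A0).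
Proof.
  intros HK.
  rewrite (RInt_ext_le _ (fun x => t^2 * tent x ^2)).
  2: lra.
  2:{ intros x Hx. rewrite gK_tent. Rring. lra. apply Rabs_le; lra. }
  rewrite RInt_scal' by (apply cg_sq, cg_tent). unfold A0. f_equal.
  apply RInt_support. lra. apply cg_sq, cg_tent. intros x Hx. rewrite tent_0; auto. ring.
Qed.

Lemma v_norm K t : 3 <= K -> norm2sq K (vseq K t) = t^2 * A0.
Proof.
  intros HK. unfold norm2sq, vseq. rewrite Rlim_const. rewrite RI_cont by (apply cg_sq, cg_v).
  apply v_sq; auto.
Qed.

Lemma v_AW K t w : AW (vseq K t) w = t * Tw (gK K) w.
Proof.
  unfold AW, vseq. rewrite Rlim_const. rewrite RI_cont by apply cg_v.
  rewrite RInt_scal' by apply cg_gK. reflexivity.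
Qed.

Lemma v_powfun K t r : 0 < t ->
  (fun w => powabs (AW (vseq K t) w) r) = (fun w => Rpower t r * powabs (Tw (gK K) w) r).
Proof. intros Ht. apply functional_extensionality. intros w. rewrite v_AW. apply powabs_scal; auto. Qed.

Lemma cg_vpow K t r : 0 < r -> continuity (fun w => Rpower t r * powabs (Tw (gK K) w) r).
Proof. intros Hr. apply cg_mult. apply cg_const.
  apply (cg_comp (Tw (gK K)) (fun x => powabs x r)). apply cg_Tw, cg_gK. apply cg_powabs; auto. Qed.

Lemma v_Intpow K t r : 3 <= K -> 0 < t -> 0 < r -> Intpow K r (vseq K t) = Rpower t r * Bc r.
Proof.
  intros HK Ht Hr. unfold Intpow. rewrite v_powfun by auto.
  rewrite RI_cont by (apply cg_vpow; auto).
  rewrite (RInt_ext_le _ (fun w => Rpower t r * powabs (Tw tent w) r)).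
  2: lra. 2:{ intros x Hx. rewrite Tw_gK; auto. lra. }
  rewrite RInt_scal' by (apply cg_Tpow; auto). unfold Bc. f_equal.
  apply RInt_support. lra. apply cg_Tpow; auto. intros x Hx. rewrite Tw_tent_0; auto. apply powabs_0.
Qed.

Lemma v_XK K t p q : 3 <= K -> 0 < t -> 0 < p -> 0 < q -> XK K p q (vseq K t).
Proof.
  intros HK Ht Hp Hq. split; [|split].
  - split.
    + intros n. split. apply cg_v. intros x. unfold vseq. rewrite gK_per; auto. lra.
    + intros eps Heps. exists 0%nat. intros n m _ _. unfold dist2, vseq.
      replace (fun x => (t * gK K x - t * gK K x) ^ 2) with (fun _ : R => 0)
        by (apply functional_extensionality; intros; ring).
      rewrite RI_cont by apply cg_const. rewrite RInt_const'. lra.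
  - constructor. rewrite v_powfun by auto. apply ex_RInt_Reals_0, exRI, cg_vpow; auto.
  - constructor. rewrite v_powfun by auto. apply ex_RInt_Reals_0, exRI, cg_vpow; auto.
Qed.

Lemma v_nonzero K t : 3 <= K -> 0 < t -> ~ L2eq K (vseq K t) (cst_seq 0).
Proof.
  intros HK Ht H. unfold L2eq, dist2, vseq, cst_seq in H.
  replace (fun x => (t * gK K x - 0) ^ 2) with (fun x => (t * gK K x) ^ 2) in H
    by (apply functional_extensionality; intros; ring).
  rewrite RI_cont in H by (apply cg_sq, cg_v). rewrite v_sq in H by auto.
  pose proof (UL_sequence _ _ _ H (Un_cv_const _)).
  pose proof A0_pos. assert (0 < t^2) by (apply pow_lt; auto). nra.
Qed.

Lemma cp_Rpower e t : 0 < t -> continuity_pt (fun x => Rpower x e) t.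
Proof. intros Ht. apply derivable_continuous_pt. exists (e * Rpower t (e-1)). apply derivable_pt_lim_power; auto. Qed.

Lemma Rpower_split t e : 0 < t -> Rpower t e = Rpower t (e - 2) * t^2.
Proof. intros Ht. rewrite <- Rpower2 by auto. rewrite <- Rpower_plus. f_equal. ring. Qed.

Lemma nehari_root s2 A Bq Bp p q : 2 < p -> 0 < q -> q < p -> 0 < s2 -> 0 < A -> 0 <= Bq -> 0 < Bp ->
  exists t, 0 < t /\ s2 * (t^2 * A) + q * (Rpower t q * Bq) - p * (Rpower t p * Bp) = 0.
Proof.
  intros hp hq hqp hs hA hBq hBp.
  set (h := fun t => p * Bp * Rpower t (p-2) - s2 * A - q * Bq * Rpower t (q-2)).
  assert (Hcont : forall t, 0 < t -> continuity_pt h t).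
  { intros t Ht. unfold h.
    apply continuity_pt_minus. apply continuity_pt_minus.
    apply continuity_pt_mult. apply continuity_pt_const. intros x y; reflexivity. apply cp_Rpower; auto.
    apply continuity_pt_const. intros x y; reflexivity.
    apply continuity_pt_mult. apply continuity_pt_const. intros x y; reflexivity. apply cp_Rpower; auto. }
  assert (HpB : 0 < p * Bp) by nra.
  set (t1 := Rpower (s2*A/(2*p*Bp)) (/(p-2))).
  assert (Ht1 : 0 < t1) by apply exp_pos.
  assert (Hh1 : h t1 < 0).
  { unfold h. unfold t1 at 1. rewrite Rpower_mult. rewrite Rinv_l by lra. rewrite Rpower_1.
    2:{ apply Rdiv_lt_0_compat; nra. }
    assert (0 <= q * Bq * Rpower t1 (q-2)). { apply Rmult_le_pos. nra. left; apply exp_pos. }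
    assert (p * Bp * (s2 * A / (2 * p * Bp)) = s2 * A / 2) by (field; lra).
    nra. }
  set (M := 2*s2*A/(p*Bp) + 1). set (N := 2*q*Bq/(p*Bp) + 1).
  assert (EM : p*Bp*M = 2*s2*A + p*Bp) by (unfold M; field; lra).
  assert (EN : p*Bp*N = 2*q*Bq + p*Bp) by (unfold N; field; lra).
  assert (HM : 0 < M) by (unfold M; assert (0 < 2*s2*A/(p*Bp)) by (apply Rdiv_lt_0_compat; nra); lra).
  assert (HN : 0 < N) by (unfold N; assert (0 <= 2*q*Bq/(p*Bp)) by (apply Rmult_le_pos; [nra|left; apply Rinv_0_lt_compat; lra]); lra).
  set (t2 := Rpower M (/(p-2)) + Rpower N (/(p-q))).
  assert (P1 : 0 < Rpower M (/(p-2))) by apply exp_pos.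
  assert (P2 : 0 < Rpower N (/(p-q))) by apply exp_pos.
  assert (Ht2 : 0 < t2) by (unfold t2; lra).
  assert (HX : M <= Rpower t2 (p-2)).
  { apply Rle_trans with (Rpower (Rpower M (/(p-2))) (p-2)).
    - rewrite Rpower_mult, Rinv_l, Rpower_1; lra.
    - apply Rle_Rpower_l. lra. unfold t2; lra. }
  assert (HZ : N <= Rpower t2 (p-q)).
  { apply Rle_trans with (Rpower (Rpower N (/(p-q))) (p-q)).
    - rewrite Rpower_mult, Rinv_l, Rpower_1; lra.
    - apply Rle_Rpower_l. lra. unfold t2; lra. }
  assert (HY : 0 < Rpower t2 (q-2)) by apply exp_pos.
  assert (HXYZ : Rpower t2 (p-2) = Rpower t2 (q-2) * Rpower t2 (p-q)).
  { rewrite <- Rpower_plus. f_equal. ring. }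
  assert (Hh2 : 0 < h t2).
  { unfold h. rewrite HXYZ at 1.
    assert (Rpower t2 (q-2) * (p*Bp) * (Rpower t2 (p-q) - N) >= 0).
    { apply Rle_ge. apply Rmult_le_pos. nra. lra. }
    assert (p*Bp*(Rpower t2 (p-2) - M) >= 0) by nra.
    rewrite HXYZ in H0. nra. }
  assert (Hroot : exists t, 0 < t /\ h t = 0).
  { destruct (Rlt_or_le t1 t2) as [Hlt|Hle].
    - destruct (IVT_interv h t1 t2) as [z [Hz Hhz]]; auto.
      intros; apply Hcont; lra. exists z. split; auto. lra.
    - assert (Hlt : t2 < t1). { destruct Hle; auto. subst. rewrite H in Hh2. lra. }
      destruct (IVT_interv (fun t => - h t) t2 t1) as [z [Hz Hhz]]; auto.
      + intros. apply continuity_pt_opp. apply Hcont; lra.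
      + lra.
      + lra.
      + exists z. split. lra. lra. }
  destruct Hroot as [t [Ht Hht]]. exists t. split; auto.
  rewrite (Rpower_split t q), (Rpower_split t p) by auto.
  unfold h in Hht.
  replace (s2 * (t ^ 2 * A) + q * (Rpower t (q - 2) * t ^ 2 * Bq) - p * (Rpower t (p - 2) * t ^ 2 * Bp))
    with (- (t^2) * (p * Bp * Rpower t (p - 2) - s2 * A - q * Bq * Rpower t (q - 2))) by ring.
  rewrite Hht. ring.
Qed.

Lemma Intpow_const K r u c : 0 < K ->
  inhabited (Riemann_integrable (fun phi => powabs (AW u phi) r) (- K) K) ->
  (forall w, -K <= w <= K -> AW u w = c) -> Intpow K r u = 2*K*powabs c r.
Proof.
  intros HK [pr] Hw. unfold Intpow. rewrite RI_RInt by (apply ex_RInt_Reals_1; exact pr).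
  rewrite (RInt_ext_le _ (fun _ => powabs c r)). rewrite RInt_const'. ring. lra.
  intros x Hx. rewrite Hw; auto. lra.
Qed.

Theorem corollary12 (p q sigma : R)
  (hp : 2 < p) (hq1 : 1 < q) (hqp : q < p) (hs : 0 < sigma ^ 2) :
  exists K0 : R, forall K : R, 0 < K -> K0 <= K ->
    forall u : nat -> R -> R, minimizer K p q sigma u -> ~ is_constant K u.
Proof.
  destruct (nehari_root (sigma^2) A0 (Bc q) (Bc p) p q hp ltac:(lra) hqp hs A0_pos
              (Bc_ge0 q ltac:(lra)) (Bc_pos p ltac:(lra))) as [t [Ht Hroot]].
  set (L0 := 1/2 * sigma^2 * (t^2 * A0) + Rpower t q * Bc q - Rpower t p * Bc p).
  set (al := (1/2 - 1/p) * sigma^2 * Rpower (sigma^2/p) (2/(p-2))).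
  assert (Hal : 0 < al).
  { unfold al. apply Rmult_lt_0_compat. apply Rmult_lt_0_compat; auto.
    assert (1/p < 1/2). { apply Rmult_lt_reg_r with (2*p). lra. field_simplify; lra. } lra.
    apply exp_pos. }
  exists (Rmax 3 (L0/(2*al) + 1)).
  intros K HK HK0 u [[HXu [Hnz HFu]] Hmin] [c Hc].
  assert (HK3 : 3 <= K) by (pose proof (Rmax_l 3 (L0/(2*al)+1)); lra).
  assert (HKL : L0/(2*al) + 1 <= K) by (pose proof (Rmax_r 3 (L0/(2*al)+1)); lra).
  assert (HvM : MK K p q sigma (vseq K t)).
  { split. apply v_XK; lra. split. apply v_nonzero; auto.
    unfold FK, QK, PK. rewrite v_norm, !v_Intpow by lra. exact Hroot. }
  assert (HLv : LK K p q sigma (vseq K t) = L0).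
  { unfold LK, QK, PK. rewrite v_norm, !v_Intpow by lra. unfold L0; ring. }
  specialize (Hmin _ HvM). rewrite HLv in Hmin.
  destruct HXu as [HL2 [Hiq Hip]].
  destruct (const_class K u c ltac:(lra) HL2 Hc) as [Hn Haw].
  assert (Hc0 : c <> 0). { intro; subst c. apply Hnz. exact Hc. }
  assert (HQ := Intpow_const K q u c ltac:(lra) Hiq Haw).
  assert (HP := Intpow_const K p u c ltac:(lra) Hip Haw).
  unfold FK, QK, PK in HFu. unfold LK, QK, PK in Hmin. rewrite Hn, HQ, HP in HFu, Hmin.
  rewrite !powabs_pos in HFu, Hmin by auto.
  rewrite <- (pow2_abs c) in HFu, Hmin.
  pose proof (numeric_I p q (sigma^2) K (Rabs c) hp hq1 hqp hs ltac:(lra) (Rabs_pos_lt c Hc0) HFu) as H.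
  fold al in H.
  assert (E : L0 = 2*al*(L0/(2*al))) by (field; lra).
  assert (2*al*(L0/(2*al) + 1) <= 2*al*K) by (apply Rmult_le_compat_l; lra).
  lra.
Qed.
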